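(* Let $\triangle=\{a,b,c\}\subset\mathbb{R}^2$ be three non-collinear points. The three lines each passing through two of the midpoints of the sides of $\mathrm{conv}(\triangle)$ divide the plane into $7$ open connected regions. Then $\mathcal{M}_\triangle$ equals the union of the closures of those of these $7$ regions whose closures contain none of the points $a,b,c$.
   Context: A set $S\subset\mathbb{R}^2$ is in convex position if every point of $S$ lies on the boundary of $\mathrm{conv}(S)$. For a point set $X\subset\mathbb{R}^2$ and a point $O$, $X_O=2O-X$ is the reflection of $X$ in $O$. The point $O$ is an admissible center for $X$ if $X\cup X_O$ is in convex position; $\mathcal{M}_X$ denotes the set of all admissible centers for $X$. *)

(* Defs.v *)
From Stdlib Require Import Reals.
Open Scope R_scope.

Definition pt : Type := (R * R)%type.

Definition padd (p q : pt) : pt := (fst p + fst q, snd p + snd q).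
Definition psub (p q : pt) : pt := (fst p - fst q, snd p - snd q).
Definition pscale (t : R) (p : pt) : pt := (t * fst p, t * snd p).
Definition cross (u v : pt) : R := fst u * snd v - snd u * fst v.
Definition dist (p q : pt) : R :=
  sqrt ((fst p - fst q) ^ 2 + (snd p - snd q) ^ 2).

Definition convex (C : pt -> Prop) : Prop :=
  forall p q t, C p -> C q -> 0 <= t <= 1 ->
    C (padd (pscale t p) (pscale (1 - t) q)).

Definition conv (S : pt -> Prop) : pt -> Prop :=
  fun x => forall C, convex C -> (forall y, S y -> C y) -> C x.

Definition closure (A : pt -> Prop) : pt -> Prop :=
  fun x => forall eps, 0 < eps -> exists y, A y /\ dist x y < eps.
Definition interior (A : pt -> Prop) : pt -> Prop :=
  fun x => exists eps, 0 < eps /\ forall y, dist x y < eps -> A y.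
Definition boundary (A : pt -> Prop) : pt -> Prop :=
  fun x => closure A x /\ ~ interior A x.

Definition convex_position (S : pt -> Prop) : Prop :=
  forall x, S x -> boundary (conv S) x.

Definition reflect_pt (O x : pt) : pt := (2 * fst O - fst x, 2 * snd O - snd x).
Definition reflect_set (O : pt) (X : pt -> Prop) : pt -> Prop :=
  fun p => exists x, X x /\ p = reflect_pt O x.

Definition admissible_center (X : pt -> Prop) (O : pt) : Prop :=
  convex_position (fun p => X p \/ reflect_set O X p).

Definition M_set (X : pt -> Prop) : pt -> Prop := fun O => admissible_center X O.

Definition tri_set (a b c : pt) : pt -> Prop := fun p => p = a \/ p = b \/ p = c.
Definition noncollinear (a b c : pt) : Prop := cross (psub b a) (psub c a) <> 0.

Definition midpoint (p q : pt) : pt := ((fst p + fst q) / 2, (snd p + snd q) / 2).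
Definition line_through (p q : pt) : pt -> Prop :=
  fun x => cross (psub q p) (psub x p) = 0.

Definition cont_path (g : R -> pt) : Prop :=
  forall t, 0 <= t <= 1 -> forall eps, 0 < eps -> exists delta, 0 < delta /\
    forall s, 0 <= s <= 1 -> Rabs (s - t) < delta -> dist (g s) (g t) < eps.
Definition path_in (U : pt -> Prop) (x y : pt) : Prop :=
  exists g, cont_path g /\ g 0 = x /\ g 1 = y /\ forall t, 0 <= t <= 1 -> U (g t).

Definition component (U Rg : pt -> Prop) : Prop :=
  exists x, U x /\ forall y, Rg y <-> path_in U x y.

Definition midline_complement (a b c : pt) : pt -> Prop :=
  fun x =>
    ~ line_through (midpoint a b) (midpoint a c) x /\
    ~ line_through (midpoint a b) (midpoint b c) x /\
    ~ line_through (midpoint a c) (midpoint b c) x.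

(* Main.v *)
Require Import Defs.
From Stdlib Require Import Reals.
From Stdlib Require Import Lra Psatz.
Open Scope R_scope.


Notation pd := Defs.dist.

Lemma abs_le_dist1 (x y : pt) : Rabs (fst x - fst y) <= pd x y.
Proof.
  unfold Defs.dist. rewrite <- (sqrt_pow2 (Rabs (fst x - fst y))) by apply Rabs_pos.
  apply sqrt_le_1_alt. rewrite pow2_abs. pose proof (pow2_ge_0 (fst x - fst y)); pose proof (pow2_ge_0 (snd x - snd y)); lra.
Qed.
Lemma abs_le_dist2 (x y : pt) : Rabs (snd x - snd y) <= pd x y.
Proof.
  unfold Defs.dist. rewrite <- (sqrt_pow2 (Rabs (snd x - snd y))) by apply Rabs_pos.
  apply sqrt_le_1_alt. rewrite pow2_abs. pose proof (pow2_ge_0 (fst x - fst y)); pose proof (pow2_ge_0 (snd x - snd y)); lra.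
Qed.
Lemma dist_le_abs (x y : pt) : pd x y <= Rabs (fst x - fst y) + Rabs (snd x - snd y).
Proof.
  unfold Defs.dist. rewrite <- (sqrt_pow2 (Rabs (fst x - fst y) + Rabs (snd x - snd y))).
  2: { pose proof (Rabs_pos (fst x - fst y)); pose proof (Rabs_pos (snd x - snd y)); lra. }
  apply sqrt_le_1_alt.
  pose proof (pow2_abs (fst x - fst y)); pose proof (pow2_abs (snd x - snd y)).
  pose proof (Rabs_pos (fst x - fst y)); pose proof (Rabs_pos (snd x - snd y)).
  nra.
Qed.
Lemma dist_refl0 (x : pt) : pd x x = 0.
Proof. unfold Defs.dist. replace ((fst x - fst x) ^ 2 + (snd x - snd x) ^ 2) with 0 by ring. apply sqrt_0. Qed.
Lemma dist_sym0 (x y : pt) : pd x y = pd y x.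
Proof. unfold Defs.dist. f_equal. ring. Qed.
Lemma dist_ge0 (x y : pt) : 0 <= pd x y.
Proof. unfold Defs.dist. apply sqrt_positivity. pose proof (pow2_ge_0 (fst x - fst y)); pose proof (pow2_ge_0 (snd x - snd y)); lra. Qed.

Definition is_aff (f : pt -> R) : Prop :=
  exists n1 n2 k, forall z, f z = n1 * fst z + n2 * snd z + k.

Lemma aff_comb f p q t : is_aff f -> f (padd (pscale t p) (pscale (1 - t) q)) = t * f p + (1 - t) * f q.
Proof. intros [n1 [n2 [k H]]]. rewrite !H. unfold padd, pscale; simpl. ring. Qed.
Lemma aff_refl f O z : is_aff f -> f (reflect_pt O z) = 2 * f O - f z.
Proof. intros [n1 [n2 [k H]]]. rewrite !H. unfold reflect_pt; simpl. ring. Qed.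

Lemma aff_lip f : is_aff f -> exists K, 0 <= K /\ forall x y, Rabs (f y - f x) <= K * pd x y.
Proof.
  intros [n1 [n2 [k H]]]. exists (Rabs n1 + Rabs n2). split.
  { pose proof (Rabs_pos n1); pose proof (Rabs_pos n2); lra. }
  intros x y. rewrite !H.
  replace (n1 * fst y + n2 * snd y + k - (n1 * fst x + n2 * snd x + k)) with
    (n1 * (fst y - fst x) + n2 * (snd y - snd x)) by ring.
  eapply Rle_trans. apply Rabs_triang. rewrite !Rabs_mult.
  pose proof (abs_le_dist1 y x); pose proof (abs_le_dist2 y x). rewrite (dist_sym0 y x) in *.
  pose proof (Rabs_pos n1); pose proof (Rabs_pos n2). nra.
Qed.

Lemma conv_convex S : convex (conv S).
Proof. intros p q t Hp Hq Ht C HC HS. apply HC; [apply Hp|apply Hq|]; auto. Qed.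
Lemma conv_incl (S : pt -> Prop) x : S x -> conv S x.
Proof. intros Hx C HC HS. auto. Qed.

Lemma near_incr f x P Q : is_aff f -> f Q < f P ->
  forall eps, 0 < eps -> exists y, pd x y < eps /\ f x < f y.
Proof.
  intros Hf HPQ eps Heps.
  set (A := Rabs (fst P - fst Q) + Rabs (snd P - snd Q) + 1).
  assert (HA : 0 < A) by (unfold A; pose proof (Rabs_pos (fst P - fst Q)); pose proof (Rabs_pos (snd P - snd Q)); lra).
  set (d := eps / (2 * A)).
  assert (Hd : 0 < d) by (unfold d; apply Rdiv_lt_0_compat; lra).
  exists (fst x + d * (fst P - fst Q), snd x + d * (snd P - snd Q)). split.
  - eapply Rle_lt_trans. apply dist_le_abs. simpl.
    replace (fst x - (fst x + d * (fst P - fst Q))) with (- (d * (fst P - fst Q))) by ring.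
    replace (snd x - (snd x + d * (snd P - snd Q))) with (- (d * (snd P - snd Q))) by ring.
    rewrite !Rabs_Ropp, !Rabs_mult, (Rabs_right d) by lra.
    assert (d * A = eps / 2) by (unfold d; field; lra).
    unfold A in H. nra.
  - destruct Hf as [n1 [n2 [k H]]]. rewrite !H in *. simpl. nra.
Qed.

Lemma not_interior_supp S x f : is_aff f -> (forall z, S z -> f z <= f x) ->
  (forall eps, 0 < eps -> exists y, pd x y < eps /\ f x < f y) -> ~ Defs.interior (conv S) x.
Proof.
  intros Hf Hs Hn [eps [Heps Hb]].
  destruct (Hn eps Heps) as [y [Hy1 Hy2]].
  specialize (Hb y Hy1). specialize (Hb (fun z => f z <= f x)).
  assert (f y <= f x); [|lra]. apply Hb; auto.
  intros p q t Hp Hq Ht. rewrite aff_comb by auto. nra.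
Qed.


Lemma div_nonneg x y : 0 <= x -> 0 < y -> 0 <= x / y.
Proof. intros. apply Rmult_le_pos; [lra| left; apply Rinv_0_lt_compat; lra]. Qed.

Lemma comb3 (C : pt -> Prop) P Q R' al be ga : convex C -> C P -> C Q -> C R' ->
  0 <= al -> 0 <= be -> 0 <= ga -> al + be + ga = 1 ->
  C (al * fst P + be * fst Q + ga * fst R', al * snd P + be * snd Q + ga * snd R').
Proof.
  intros HC HP HQ HR H1 H2 H3 H4.
  destruct (Req_dec al 1) as [E|E].
  - assert (be = 0) by lra. assert (ga = 0) by lra. subst.
    replace (1 * fst P + 0 * fst Q + 0 * fst R', 1 * snd P + 0 * snd Q + 0 * snd R') with P; auto.
    destruct P; simpl; f_equal; ring.
  - set (t := be / (1 - al)).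
    assert (Ht : 0 <= t <= 1).
    { unfold t; split. apply Rmult_le_pos; auto. left; apply Rinv_0_lt_compat; lra.
      apply Rmult_le_reg_r with (1 - al). lra. unfold Rdiv. rewrite Rmult_assoc, Rinv_l by lra. lra. }
    pose proof (HC Q R' t HQ HR Ht) as Hin.
    assert (Hal : 0 <= al <= 1) by lra.
    pose proof (HC P _ al HP Hin Hal) as Hout.
    replace (al * fst P + be * fst Q + ga * fst R', al * snd P + be * snd Q + ga * snd R')
      with (padd (pscale al P) (pscale (1 - al) (padd (pscale t Q) (pscale (1 - t) R')))); auto.
    replace ga with (1 - al - be) by lra. unfold padd, pscale, t; simpl. assert (1 - al <> 0) by lra. f_equal; field; auto.
Qed.

Lemma comb4 (C : pt -> Prop) P Q R' T al be ga de : convex C -> C P -> C Q -> C R' -> C T ->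
  0 <= al -> 0 <= be -> 0 <= ga -> 0 <= de -> al + be + ga + de = 1 ->
  C (al * fst P + be * fst Q + ga * fst R' + de * fst T, al * snd P + be * snd Q + ga * snd R' + de * snd T).
Proof.
  intros HC HP HQ HR HT H1 H2 H3 H4 H5.
  destruct (Req_dec de 1) as [E|E].
  - assert (al = 0) by lra. assert (be = 0) by lra. assert (ga = 0) by lra. subst.
    replace (0 * fst P + 0 * fst Q + 0 * fst R' + 1 * fst T, 0 * snd P + 0 * snd Q + 0 * snd R' + 1 * snd T) with T; auto.
    destruct T; simpl; f_equal; ring.
  - set (w := 1 - de).
    pose proof (comb3 C P Q R' (al / w) (be / w) (ga / w) HC HP HQ HR) as Hin.
    assert (Hw : 0 < w) by (unfold w; lra).
    assert (0 <= al / w) by (apply div_nonneg; lra).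
    assert (0 <= be / w) by (apply div_nonneg; lra).
    assert (0 <= ga / w) by (apply div_nonneg; lra).
    assert (al / w + be / w + ga / w = 1) by (replace (al / w + be / w + ga / w) with ((al + be + ga) / w) by (field; lra); replace (al + be + ga) with w by (unfold w; lra); field; lra).
    specialize (Hin H H0 H6 H7).
    assert (Hde : 0 <= de <= 1) by lra.
    pose proof (HC T _ de HT Hin Hde) as Hout.
    match type of Hout with C ?X => replace (_, _) with X; auto end.
    unfold padd, pscale, w; simpl. f_equal; field; lra.
Qed.


Definition bary (p q r z : pt) : R := cross (psub q z) (psub r z) / cross (psub q p) (psub r p).

Lemma bary_aff p q r : is_aff (bary p q r).
Proof.
  set (E := cross (psub q p) (psub r p)).
  exists ((snd q - snd r) / E), ((fst r - fst q) / E), ((fst q * snd r - snd q * fst r) / E).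
  intros z. unfold bary. fold E. unfold cross, psub; simpl. unfold Rdiv. ring.
Qed.

Lemma ncD1 a b c : cross (psub c b) (psub a b) = cross (psub b a) (psub c a).
Proof. unfold cross, psub; simpl; ring. Qed.
Lemma ncD2 a b c : cross (psub a c) (psub b c) = cross (psub b a) (psub c a).
Proof. unfold cross, psub; simpl; ring. Qed.

Lemma bary_sum a b c z : noncollinear a b c -> bary a b c z + bary b c a z + bary c a b z = 1.
Proof.
  intros H. unfold noncollinear in H. unfold bary. rewrite ncD1, ncD2.
  revert H; unfold cross, psub; simpl; intros H. field. intro H'; apply H; rewrite <- H'; ring.
Qed.
Lemma bary_self p q r : cross (psub q p) (psub r p) <> 0 -> bary p q r p = 1.
Proof. intros H. unfold bary. field. auto. Qed.
Lemma bary_q p q r : bary p q r q = 0.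
Proof. unfold bary, cross, psub. simpl. unfold Rdiv. ring. Qed.
Lemma bary_r p q r : bary p q r r = 0.
Proof. unfold bary, cross, psub. simpl. unfold Rdiv. ring. Qed.

Lemma abs_tri x x0 : Rabs x <= Rabs x0 + Rabs (x - x0).
Proof. replace x with (x0 + (x - x0)) at 1 by ring. apply Rabs_triang. Qed.

Lemma G3 a b c O (S : pt -> Prop) : noncollinear a b c ->
  S b -> S c -> S (reflect_pt O b) -> S (reflect_pt O c) ->
  1/2 < bary a b c O -> bary b c a O < 1/2 -> bary c a b O < 1/2 ->
  Defs.interior (conv S) a.
Proof.
  intros Hnc Sb Sc Sb' Sc' Hp Hq Hr.
  pose proof (bary_sum a b c O Hnc) as Hsum.
  set (D := cross (psub b a) (psub c a)) in *.
  assert (HD : D <> 0) by exact Hnc.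
  set (p := bary a b c O) in *. set (q := bary b c a O) in *. set (r := bary c a b O) in *.
  set (E := cross (psub b O) (psub c O)).
  assert (HE : E = p * D) by (unfold p, bary, E; fold D; field; auto).
  assert (HE0 : E <> 0) by (rewrite HE; apply Rmult_integral_contrapositive; split; lra).
  set (sf := fun y => cross (psub y O) (psub c O) / E).
  set (tf := fun y => cross (psub b O) (psub y O) / E).
  assert (Hq' : q * D = cross (psub c O) (psub a O)) by (unfold q, bary; rewrite (ncD1 a b c); fold D; field; auto).
  assert (Hr' : r * D = cross (psub a O) (psub b O)) by (unfold r, bary; rewrite (ncD2 a b c); fold D; field; auto).
  assert (Hsa : sf a * p = - q).
  { apply (Rmult_eq_reg_r D); [|auto]. replace (- q * D) with (- (q * D)) by ring. rewrite Hq'.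
    unfold sf. rewrite HE. revert HD. unfold cross, psub; simpl. intros. field. split; lra. }
  assert (Hta : tf a * p = - r).
  { apply (Rmult_eq_reg_r D); [|auto]. replace (- r * D) with (- (r * D)) by ring. rewrite Hr'.
    unfold tf. rewrite HE. revert HD. unfold cross, psub; simpl. intros. field. split; lra. }
  set (m := 1 - Rabs (sf a) - Rabs (tf a)).
  assert (Hm : 0 < m).
  { unfold m. destruct (Rcase_abs (sf a)) as [h1|h1]; destruct (Rcase_abs (tf a)) as [h2|h2];
    [rewrite (Rabs_left (sf a)), (Rabs_left (tf a)) by lra
    |rewrite (Rabs_left (sf a)), (Rabs_right (tf a)) by lra
    |rewrite (Rabs_right (sf a)), (Rabs_left (tf a)) by lra
    |rewrite (Rabs_right (sf a)), (Rabs_right (tf a)) by lra]; nra. }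
  assert (Hsaff : is_aff sf).
  { exists ((snd c - snd O) / E), (- (fst c - fst O) / E), ((- fst O * (snd c - snd O) + snd O * (fst c - fst O)) / E).
    intros z. unfold sf, cross, psub; simpl. unfold Rdiv. ring. }
  assert (Htaff : is_aff tf).
  { exists (- (snd b - snd O) / E), ((fst b - fst O) / E), ((fst O * (snd b - snd O) - snd O * (fst b - fst O)) / E).
    intros z. unfold tf, cross, psub; simpl. unfold Rdiv. ring. }
  destruct (aff_lip sf Hsaff) as [Ks [HKs Ls]].
  destruct (aff_lip tf Htaff) as [Kt [HKt Lt]].
  exists (m / (2 * (Ks + Kt + 1))). split.
  { apply Rdiv_lt_0_compat; lra. }
  intros y Hy.
  assert (Hd : (Ks + Kt) * pd a y < m / 2).
  { assert (m / (2 * (Ks + Kt + 1)) * (Ks + Kt + 1) = m / 2) by (field; lra).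
    pose proof (dist_ge0 a y). nra. }
  specialize (Ls a y). specialize (Lt a y).
  pose proof (abs_tri (sf y) (sf a)). pose proof (abs_tri (tf y) (tf a)).
  set (s := sf y) in *. set (t := tf y) in *.
  assert (Hst : Rabs s + Rabs t <= 1). { unfold m in Hd, Hm. clear -Hd Ls Lt H H0 Hm. lra. }
  pose proof (Rle_abs s). pose proof (Rle_abs (-s)). pose proof (Rle_abs t). pose proof (Rle_abs (-t)).
  rewrite Rabs_Ropp in *.
  set (T := Rabs t) in *.
  assert (Hy1 : fst y = s * (fst b - fst O) + t * (fst c - fst O) + fst O).
  { unfold s, t, sf, tf. unfold E in *. revert HE0. unfold cross, psub; simpl. intros. field. auto. }
  assert (Hy2 : snd y = s * (snd b - snd O) + t * (snd c - snd O) + snd O).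
  { unfold s, t, sf, tf. unfold E in *. revert HE0. unfold cross, psub; simpl. intros. field. auto. }
  pose proof (comb4 (conv S) b c (reflect_pt O b) (reflect_pt O c)
     ((1 - T + s) / 2) ((T + t) / 2) ((1 - T - s) / 2) ((T - t) / 2) (conv_convex S)
     (conv_incl S b Sb) (conv_incl S c Sc) (conv_incl S _ Sb') (conv_incl S _ Sc')) as Hc.
  match type of Hc with _ -> _ -> _ -> _ -> _ -> conv S ?X => replace y with X end.
  - apply Hc; lra.
  - destruct y as [y1 y2]. simpl in Hy1, Hy2. unfold reflect_pt; simpl. f_equal; [rewrite Hy1|rewrite Hy2]; field.
Qed.

Lemma aff_opp f : is_aff f -> is_aff (fun z => - f z).
Proof. intros [n1 [n2 [k H]]]. exists (-n1), (-n2), (-k). intros z. rewrite H. ring. Qed.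

Lemma supp6 f a b c O (S : pt -> Prop) P Q : is_aff f ->
  (forall z, S z -> z = a \/ z = b \/ z = c \/ z = reflect_pt O a \/ z = reflect_pt O b \/ z = reflect_pt O c) ->
  f b <= f a -> f c <= f a -> 2 * f O - f a <= f a -> 2 * f O - f b <= f a -> 2 * f O - f c <= f a ->
  f Q < f P ->
  ~ Defs.interior (conv S) a /\ ~ Defs.interior (conv S) (reflect_pt O a).
Proof.
  intros Hf HS H1 H2 H3 H4 H5 HPQ. split.
  - apply (not_interior_supp S a f Hf).
    + intros z Hz. destruct (HS z Hz) as [->|[->|[->|[->|[->| ->]]]]]; rewrite ?aff_refl by auto; lra.
    + apply near_incr with P Q; auto.
  - apply (not_interior_supp S _ (fun z => - f z) (aff_opp f Hf)).
    + intros z Hz. destruct (HS z Hz) as [->|[->|[->|[->|[->| ->]]]]]; rewrite ?aff_refl by auto; lra.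
    + apply (near_incr (fun z => - f z) _ Q P); [apply aff_opp; auto | lra].
Qed.

Lemma G4 a b c O (S : pt -> Prop) : noncollinear a b c ->
  (forall z, S z -> z = a \/ z = b \/ z = c \/ z = reflect_pt O a \/ z = reflect_pt O b \/ z = reflect_pt O c) ->
  (bary a b c O <= 1/2 \/ 1/2 <= bary b c a O \/ 1/2 <= bary c a b O) ->
  ~ Defs.interior (conv S) a /\ ~ Defs.interior (conv S) (reflect_pt O a).
Proof.
  intros Hnc HS Hg.
  assert (Ha1 : bary a b c a = 1) by (apply bary_self; exact Hnc).
  assert (Hb1 : bary b c a b = 1) by (apply bary_self; rewrite ncD1; exact Hnc).
  assert (Hc1 : bary c a b c = 1) by (apply bary_self; rewrite ncD2; exact Hnc).
  pose proof (bary_q a b c) as E1. pose proof (bary_r a b c) as E2.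
  pose proof (bary_q b c a) as E3. pose proof (bary_r b c a) as E4.
  pose proof (bary_q c a b) as E5. pose proof (bary_r c a b) as E6.
  destruct Hg as [H|[H|H]].
  - apply (supp6 (bary a b c) a b c O S a b (bary_aff a b c) HS); lra.
  - apply (supp6 (fun z => - bary b c a z) a b c O S a b (aff_opp _ (bary_aff b c a)) HS); lra.
  - apply (supp6 (fun z => - bary c a b z) a b c O S a c (aff_opp _ (bary_aff c a b)) HS); lra.
Qed.


Definition good3 (x y z : R) := x <= 1/2 \/ 1/2 <= y \/ 1/2 <= z.

Lemma nc_rot a b c : noncollinear a b c -> noncollinear b c a.
Proof. unfold noncollinear. rewrite (ncD1 a b c). auto. Qed.

Lemma S6_iff a b c O z : (tri_set a b c z \/ reflect_set O (tri_set a b c) z) <->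
  (z = a \/ z = b \/ z = c \/ z = reflect_pt O a \/ z = reflect_pt O b \/ z = reflect_pt O c).
Proof.
  unfold tri_set, reflect_set. split.
  - intros [H|[x [Hx ->]]]; [tauto|]. destruct Hx as [->|[->| ->]]; tauto.
  - intros [H|[H|[H|[H|[H|H]]]]]; try tauto; right; eauto.
Qed.

Lemma M_iff a b c O : noncollinear a b c ->
  (M_set (tri_set a b c) O <->
   good3 (bary a b c O) (bary b c a O) (bary c a b O) /\
   good3 (bary b c a O) (bary c a b O) (bary a b c O) /\
   good3 (bary c a b O) (bary a b c O) (bary b c a O)).
Proof.
  intros Hnc. pose proof (nc_rot _ _ _ Hnc) as Hnc2. pose proof (nc_rot _ _ _ Hnc2) as Hnc3.
  set (S := fun p => tri_set a b c p \/ reflect_set O (tri_set a b c) p).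
  assert (HS : forall z, S z <-> (z = a \/ z = b \/ z = c \/ z = reflect_pt O a \/ z = reflect_pt O b \/ z = reflect_pt O c)) by (intros; apply S6_iff).
  unfold M_set, admissible_center, convex_position. fold S. split.
  - intros HM.
    assert (NI : forall x, S x -> ~ Defs.interior (conv S) x) by (intros x Hx; apply (HM x Hx)).
    unfold good3. split; [|split].
    + destruct (Rle_lt_dec (bary a b c O) (1/2)); [tauto|].
      destruct (Rle_lt_dec (1/2) (bary b c a O)); [tauto|].
      destruct (Rle_lt_dec (1/2) (bary c a b O)); [tauto|].
      exfalso. apply (NI a); [apply HS; tauto|].
      apply G3 with b c O; auto; apply HS; tauto.
    + destruct (Rle_lt_dec (bary b c a O) (1/2)); [tauto|].
      destruct (Rle_lt_dec (1/2) (bary c a b O)); [tauto|].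
      destruct (Rle_lt_dec (1/2) (bary a b c O)); [tauto|].
      exfalso. apply (NI b); [apply HS; tauto|].
      apply G3 with c a O; auto; apply HS; tauto.
    + destruct (Rle_lt_dec (bary c a b O) (1/2)); [tauto|].
      destruct (Rle_lt_dec (1/2) (bary a b c O)); [tauto|].
      destruct (Rle_lt_dec (1/2) (bary b c a O)); [tauto|].
      exfalso. apply (NI c); [apply HS; tauto|].
      apply G3 with a b O; auto; apply HS; tauto.
  - intros [Ga [Gb Gc]] x Hx. split.
    + intros eps Heps. exists x. split; [apply conv_incl; auto|]. rewrite dist_refl0. lra.
    + pose proof (G4 a b c O S Hnc (fun z Hz => proj1 (HS z) Hz) Ga) as [A1 A2].
      assert (HSb : forall z, S z -> z = b \/ z = c \/ z = a \/ z = reflect_pt O b \/ z = reflect_pt O c \/ z = reflect_pt O a)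
        by (intros z Hz; apply HS in Hz; tauto).
      assert (HSc : forall z, S z -> z = c \/ z = a \/ z = b \/ z = reflect_pt O c \/ z = reflect_pt O a \/ z = reflect_pt O b)
        by (intros z Hz; apply HS in Hz; tauto).
      pose proof (G4 b c a O S Hnc2 HSb Gb) as [B1 B2].
      pose proof (G4 c a b O S Hnc3 HSc Gc) as [C1 C2].
      apply HS in Hx. destruct Hx as [->|[->|[->|[->|[->| ->]]]]]; auto.
Qed.


Definition clamp (t : R) : R := Rmax 0 (Rmin 1 t).
Lemma clamp_in t : 0 <= clamp t <= 1.
Proof. unfold clamp, Rmax, Rmin. repeat destruct Rle_dec; lra. Qed.
Lemma clamp_id t : 0 <= t <= 1 -> clamp t = t.
Proof. intros. unfold clamp, Rmax, Rmin. repeat destruct Rle_dec; lra. Qed.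
Lemma clamp_lip s t : Rabs (clamp s - clamp t) <= Rabs (s - t).
Proof. unfold clamp, Rmax, Rmin. repeat destruct Rle_dec; split_Rabs; lra. Qed.

Lemma cont_h f g : is_aff f -> cont_path g -> continuity (fun t => f (g (clamp t)) - 1/2).
Proof.
  intros Hf Hg t0. destruct (aff_lip f Hf) as [K [HK HL]].
  unfold continuity_pt, continue_in, limit1_in, limit_in. simpl.
  intros eps Heps.
  destruct (Hg (clamp t0) (clamp_in t0) (eps / (K + 1))) as [d [Hd Hd2]].
  { apply Rdiv_lt_0_compat; lra. }
  exists d. split; [lra|]. intros x [_ Hx]. unfold Rdist in *.
  pose proof (clamp_lip x t0).
  specialize (Hd2 (clamp x) (clamp_in x) ltac:(lra)).
  specialize (HL (g (clamp t0)) (g (clamp x))).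
  rewrite dist_sym0 in HL.
  replace (f (g (clamp x)) - 1 / 2 - (f (g (clamp t0)) - 1 / 2)) with (f (g (clamp x)) - f (g (clamp t0))) by ring.
  assert (eps / (K + 1) * (K + 1) = eps) by (field; lra).
  pose proof (dist_ge0 (g (clamp x)) (g (clamp t0))). nra.
Qed.

Lemma path_lt f g : is_aff f -> cont_path g -> (forall t, 0 <= t <= 1 -> f (g t) <> 1/2) ->
  f (g 0) < 1/2 -> f (g 1) < 1/2.
Proof.
  intros Hf Hg Hne H0.
  destruct (Rlt_le_dec (f (g 1)) (1/2)) as [H|H]; auto. exfalso.
  assert (H1 : 1/2 < f (g 1)) by (assert (f (g 1) <> 1/2) by (apply Hne; lra); lra).
  assert (A0 : (fun t => f (g (clamp t)) - 1/2) 0 < 0) by (simpl; rewrite clamp_id by lra; lra).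
  assert (A1 : 0 < (fun t => f (g (clamp t)) - 1/2) 1) by (simpl; rewrite clamp_id by lra; lra).
  destruct (IVT _ 0 1 (cont_h f g Hf Hg) ltac:(lra) A0 A1) as [z [Hz Hz2]].
  rewrite clamp_id in Hz2 by lra. apply (Hne z Hz). lra.
Qed.

Definition side (f : pt -> R) (s : bool) (y : pt) : Prop := if s then 1/2 < f y else f y < 1/2.
Definition wside (f : pt -> R) (s : bool) (y : pt) : Prop := if s then 1/2 <= f y else f y <= 1/2.

Lemma aff_1m f : is_aff f -> is_aff (fun z => 1 - f z).
Proof. intros [n1 [n2 [k H]]]. exists (-n1), (-n2), (1-k). intros z. rewrite H. ring. Qed.

Lemma path_side f g s : is_aff f -> cont_path g -> (forall t, 0 <= t <= 1 -> f (g t) <> 1/2) ->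
  side f s (g 0) -> side f s (g 1).
Proof.
  intros Hf Hg Hne. destruct s; simpl.
  - intros H. assert (1 - f (g 1) < 1/2); [|lra].
    apply (path_lt (fun z => 1 - f z) g (aff_1m f Hf) Hg); [|lra].
    intros t Ht. specialize (Hne t Ht). lra.
  - apply path_lt; auto.
Qed.

Definition seg (x y : pt) (t : R) : pt := padd (pscale t y) (pscale (1 - t) x).

Lemma seg_cont x y : cont_path (seg x y).
Proof.
  intros t Ht eps Heps.
  set (A := Rabs (fst y - fst x) + Rabs (snd y - snd x)).
  assert (HA : 0 <= A) by (unfold A; pose proof (Rabs_pos (fst y - fst x)); pose proof (Rabs_pos (snd y - snd x)); lra).
  exists (eps / (A + 1)). split; [apply Rdiv_lt_0_compat; lra|].
  intros s Hs Hst. eapply Rle_lt_trans. apply dist_le_abs.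
  unfold seg, padd, pscale; simpl.
  replace (s * fst y + (1 - s) * fst x - (t * fst y + (1 - t) * fst x)) with ((s - t) * (fst y - fst x)) by ring.
  replace (s * snd y + (1 - s) * snd x - (t * snd y + (1 - t) * snd x)) with ((s - t) * (snd y - snd x)) by ring.
  rewrite !Rabs_mult. fold A.
  assert (eps / (A + 1) * (A + 1) = eps) by (field; lra).
  pose proof (Rabs_pos (s - t)). fold A in HA.
  replace (Rabs (s - t) * Rabs (fst y - fst x) + Rabs (s - t) * Rabs (snd y - snd x)) with (Rabs (s - t) * A) by (unfold A; ring).
  nra.
Qed.

Lemma seg_aff f x y t : is_aff f -> f (seg x y t) = t * f y + (1 - t) * f x.
Proof. intros. unfold seg. apply aff_comb; auto. Qed.

Lemma conv_gt c u v t : c < u -> c < v -> 0 <= t <= 1 -> c < t * u + (1 - t) * v.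
Proof. intros. destruct (Rle_lt_dec u v); nra. Qed.
Lemma conv_lt c u v t : u < c -> v < c -> 0 <= t <= 1 -> t * u + (1 - t) * v < c.
Proof. intros. destruct (Rle_lt_dec u v); nra. Qed.

Lemma seg_side f s x y t : is_aff f -> 0 <= t <= 1 -> side f s x -> side f s y -> side f s (seg x y t).
Proof.
  intros Hf Ht Hx Hy. unfold side in *. rewrite seg_aff by auto. destruct s; [apply conv_gt|apply conv_lt]; auto.
Qed.

Lemma side_ne f s y : side f s y -> f y <> 1/2.
Proof. unfold side; destruct s; lra. Qed.

Lemma closure_wside (Rg : pt -> Prop) f s p : is_aff f -> Defs.closure Rg p ->
  (forall y, Rg y -> side f s y) -> wside f s p.
Proof.
  intros Hf Hc Hs. destruct (aff_lip f Hf) as [K [HK HL]].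
  unfold wside. destruct s.
  - destruct (Rle_lt_dec (1/2) (f p)) as [H|H]; auto. exfalso.
    destruct (Hc ((1/2 - f p) / (K + 1))) as [y [Hy Hd]]. apply Rdiv_lt_0_compat; lra.
    specialize (Hs y Hy). simpl in Hs. specialize (HL p y).
    assert ((1/2 - f p) / (K + 1) * (K + 1) = 1/2 - f p) by (field; lra).
    pose proof (dist_ge0 p y). pose proof (Rle_abs (f y - f p)). nra.
  - destruct (Rle_lt_dec (f p) (1/2)) as [H|H]; auto. exfalso.
    destruct (Hc ((f p - 1/2) / (K + 1))) as [y [Hy Hd]]. apply Rdiv_lt_0_compat; lra.
    specialize (Hs y Hy). simpl in Hs. specialize (HL p y).
    assert ((f p - 1/2) / (K + 1) * (K + 1) = f p - 1/2) by (field; lra).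
    pose proof (dist_ge0 p y). pose proof (Rle_abs (-(f y - f p))). rewrite Rabs_Ropp in *. nra.
Qed.

Lemma seg_near x0 O eps : 0 < eps -> exists t, 0 < t <= 1 /\ pd O (seg O x0 t) < eps.
Proof.
  intros Heps.
  set (A := Rabs (fst x0 - fst O) + Rabs (snd x0 - snd O)).
  assert (HA : 0 <= A) by (unfold A; pose proof (Rabs_pos (fst x0 - fst O)); pose proof (Rabs_pos (snd x0 - snd O)); lra).
  exists (Rmin 1 (eps / (2 * (A + 1)))).
  assert (Hp : 0 < Rmin 1 (eps / (2 * (A + 1)))) by (apply Rmin_pos; [lra| apply Rdiv_lt_0_compat; lra]).
  pose proof (Rmin_l 1 (eps / (2 * (A + 1)))). pose proof (Rmin_r 1 (eps / (2 * (A + 1)))).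
  set (t := Rmin 1 (eps / (2 * (A + 1)))) in *.
  split; [lra|].
  eapply Rle_lt_trans. apply dist_le_abs.
  unfold seg, padd, pscale; simpl.
  replace (fst O - (t * fst x0 + (1 - t) * fst O)) with (- (t * (fst x0 - fst O))) by ring.
  replace (snd O - (t * snd x0 + (1 - t) * snd O)) with (- (t * (snd x0 - snd O))) by ring.
  rewrite !Rabs_Ropp, !Rabs_mult, (Rabs_right t) by lra. fold A.
  replace (t * Rabs (fst x0 - fst O) + t * Rabs (snd x0 - snd O)) with (t * A) by (unfold A; ring).
  assert (eps / (2 * (A + 1)) * (2 * (A + 1)) = eps) by (field; lra).
  nra.
Qed.

Lemma seg_wside f s O x0 t : is_aff f -> 0 < t <= 1 -> wside f s O -> side f s x0 -> side f s (seg O x0 t).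
Proof.
  intros Hf Ht HO Hx. unfold side, wside in *. rewrite seg_aff by auto. destruct s; nra.
Qed.


Lemma ml1 a b c x : noncollinear a b c ->
  cross (psub (midpoint a c) (midpoint a b)) (psub x (midpoint a b)) = 1/2 * cross (psub b a) (psub c a) * (bary a b c x - 1/2).
Proof. unfold noncollinear, bary, midpoint, cross, psub; simpl. intros H. field. auto. Qed.
Lemma ml2 a b c x : noncollinear a b c ->
  cross (psub (midpoint b c) (midpoint a b)) (psub x (midpoint a b)) = - (1/2) * cross (psub b a) (psub c a) * (bary b c a x - 1/2).
Proof. intros H. unfold bary. rewrite (ncD1 a b c). revert H. unfold noncollinear, midpoint, cross, psub; simpl. intros H. field. auto. Qed.
Lemma ml3 a b c x : noncollinear a b c ->
  cross (psub (midpoint b c) (midpoint a c)) (psub x (midpoint a c)) = 1/2 * cross (psub b a) (psub c a) * (bary c a b x - 1/2).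
Proof. intros H. unfold bary. rewrite (ncD2 a b c). revert H. unfold noncollinear, midpoint, cross, psub; simpl. intros H. field. auto. Qed.

Lemma U_iff a b c x : noncollinear a b c ->
  (midline_complement a b c x <-> bary a b c x <> 1/2 /\ bary b c a x <> 1/2 /\ bary c a b x <> 1/2).
Proof.
  intros H. unfold midline_complement, line_through. rewrite (ml1 a b c x H), (ml2 a b c x H), (ml3 a b c x H).
  assert (HD : cross (psub b a) (psub c a) <> 0) by exact H.
  set (D := cross (psub b a) (psub c a)) in *.
  split.
  - intros [H1 [H2 H3]]. repeat split; intro E; [apply H1|apply H2|apply H3]; rewrite E; ring.
  - intros [H1 [H2 H3]]. repeat split; intro E.
    + apply Rmult_integral in E. destruct E as [E|E]; [apply Rmult_integral in E; destruct E; lra|apply H1; lra].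
    + apply Rmult_integral in E. destruct E as [E|E]; [apply Rmult_integral in E; destruct E; lra|apply H2; lra].
    + apply Rmult_integral in E. destruct E as [E|E]; [apply Rmult_integral in E; destruct E; lra|apply H3; lra].
Qed.

Definition reg a b c sa sb sc y := side (bary a b c) sa y /\ side (bary b c a) sb y /\ side (bary c a b) sc y.
Definition wreg a b c sa sb sc y := wside (bary a b c) sa y /\ wside (bary b c a) sb y /\ wside (bary c a b) sc y.

Lemma reg_U a b c sa sb sc y : noncollinear a b c -> reg a b c sa sb sc y -> midline_complement a b c y.
Proof. intros H [H1 [H2 H3]]. apply U_iff; auto. repeat split; eapply side_ne; eauto. Qed.

Lemma exists_reg a b c x : noncollinear a b c -> midline_complement a b c x -> exists sa sb sc, reg a b c sa sb sc x.
Proof.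
  intros H Hx. apply U_iff in Hx; auto. destruct Hx as [H1 [H2 H3]].
  assert (G : forall f, f x <> 1/2 -> exists s, side f s x).
  { intros f Hf. destruct (Rlt_le_dec (f x) (1/2)); [exists false; simpl; auto|exists true; simpl; lra]. }
  destruct (G _ H1) as [sa Ha]. destruct (G _ H2) as [sb Hb]. destruct (G _ H3) as [sc Hc].
  exists sa, sb, sc. repeat split; auto.
Qed.

Lemma comp_reg a b c sa sb sc x : noncollinear a b c -> reg a b c sa sb sc x ->
  forall y, path_in (midline_complement a b c) x y <-> reg a b c sa sb sc y.
Proof.
  intros H Hx y. split.
  - intros [g [Hg [H0 [H1 HU]]]]. subst.
    assert (Hne : forall t, 0 <= t <= 1 -> bary a b c (g t) <> 1/2 /\ bary b c a (g t) <> 1/2 /\ bary c a b (g t) <> 1/2)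
      by (intros t Ht; apply U_iff; auto).
    destruct Hx as [Ha [Hb Hc]]. repeat split.
    + apply path_side; auto. apply bary_aff. intros t Ht; apply Hne; auto.
    + apply path_side; auto. apply bary_aff. intros t Ht; apply Hne; auto.
    + apply path_side; auto. apply bary_aff. intros t Ht; apply Hne; auto.
  - intros Hy. exists (seg x y). split; [apply seg_cont|]. split; [|split].
    + unfold seg, padd, pscale. destruct x; simpl; f_equal; ring.
    + unfold seg, padd, pscale. destruct y; simpl; f_equal; ring.
    + intros t Ht. apply reg_U with sa sb sc; auto. destruct Hx as [Ha [Hb Hc]]. destruct Hy as [Ha' [Hb' Hc']].
      repeat split; apply seg_side; auto; apply bary_aff.
Qed.

Definition pt3 (a b c : pt) (al be : R) : pt :=
  (al * fst a + be * fst b + (1 - al - be) * fst c, al * snd a + be * snd b + (1 - al - be) * snd c).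

Lemma pt3_vals a b c al be : noncollinear a b c ->
  bary a b c (pt3 a b c al be) = al /\ bary b c a (pt3 a b c al be) = be /\ bary c a b (pt3 a b c al be) = 1 - al - be.
Proof.
  intros H. unfold bary. rewrite (ncD1 a b c), (ncD2 a b c). revert H.
  unfold noncollinear, pt3, cross, psub; simpl. intros H. repeat split; field; auto.
Qed.

Lemma vert_vals a b c : noncollinear a b c ->
  bary a b c a = 1 /\ bary b c a a = 0 /\ bary c a b a = 0 /\
  bary a b c b = 0 /\ bary b c a b = 1 /\ bary c a b b = 0 /\
  bary a b c c = 0 /\ bary b c a c = 0 /\ bary c a b c = 1.
Proof.
  intros Hnc.
  assert (Ha1 : bary a b c a = 1) by (apply bary_self; exact Hnc).
  assert (Hb1 : bary b c a b = 1) by (apply bary_self; rewrite (ncD1 a b c); exact Hnc).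
  assert (Hc1 : bary c a b c = 1) by (apply bary_self; rewrite (ncD2 a b c); exact Hnc).
  pose proof (bary_q a b c) as E1. pose proof (bary_r a b c) as E2.
  pose proof (bary_q b c a) as E3. pose proof (bary_r b c a) as E4.
  pose proof (bary_q c a b) as E5. pose proof (bary_r c a b) as E6.
  tauto.
Qed.


Lemma good_all p q r : p + q + r = 1 ->
  ((p <= 1/2 /\ q <= 1/2 /\ r <= 1/2) \/ (1/2 <= p /\ 1/2 <= q) \/ (1/2 <= q /\ 1/2 <= r) \/ (1/2 <= p /\ 1/2 <= r)) ->
  good3 p q r /\ good3 q r p /\ good3 r p q.
Proof.
  intros Hs H. unfold good3.
  destruct H as [H|[H|[H|H]]]; repeat split;
  first [left; lra | right; left; lra | right; right; lra].
Qed.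

Lemma build a b c O sa sb sc x0 : noncollinear a b c -> reg a b c sa sb sc x0 -> wreg a b c sa sb sc O ->
  ~ wreg a b c sa sb sc a -> ~ wreg a b c sa sb sc b -> ~ wreg a b c sa sb sc c ->
  exists Rg : pt -> Prop,
    component (midline_complement a b c) Rg /\
    Defs.closure Rg O /\
    ~ Defs.closure Rg a /\ ~ Defs.closure Rg b /\ ~ Defs.closure Rg c.
Proof.
  intros Hnc Hx0 HO Na Nb Nc. exists (reg a b c sa sb sc).
  assert (Hcl : forall v, Defs.closure (reg a b c sa sb sc) v -> wreg a b c sa sb sc v).
  { intros v Hv. repeat split; (eapply closure_wside; [apply bary_aff|apply Hv|]); intros y Hy; apply Hy. }
  split; [|split; [|split; [|split]]].
  - exists x0. split; [eapply reg_U; eauto|]. intros y. symmetry. apply comp_reg; auto.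
  - intros eps Heps. destruct (seg_near x0 O eps Heps) as [t [Ht Hd]]. exists (seg O x0 t). split; auto.
    destruct HO as [H1 [H2 H3]]. destruct Hx0 as [H1' [H2' H3']].
    repeat split; apply seg_wside; auto; apply bary_aff.
  - intro H; apply Na, Hcl, H.
  - intro H; apply Nb, Hcl, H.
  - intro H; apply Nc, Hcl, H.
Qed.

Theorem mainTheorem4 (a b c : pt) (Hnc : noncollinear a b c) (O : pt) :
  M_set (tri_set a b c) O <->
  exists Rg : pt -> Prop,
    component (midline_complement a b c) Rg /\
    closure Rg O /\
    ~ closure Rg a /\ ~ closure Rg b /\ ~ closure Rg c.
Proof.
  pose proof (vert_vals a b c Hnc) as V.
  pose proof (bary_sum a b c O Hnc) as HsO.
  rewrite (M_iff a b c O Hnc). split.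
  - intros [Ga [Gb Gc]]. unfold good3 in *.
    set (p := bary a b c O) in *. set (q := bary b c a O) in *. set (r := bary c a b O) in *.
    assert (Cases : (p <= 1/2 /\ q <= 1/2 /\ r <= 1/2) \/ (1/2 <= p /\ 1/2 <= q) \/ (1/2 <= q /\ 1/2 <= r) \/ (1/2 <= p /\ 1/2 <= r)).
    { destruct (Rle_lt_dec p (1/2)); destruct (Rle_lt_dec q (1/2)); destruct (Rle_lt_dec r (1/2)); try lra;
      destruct Ga as [?|[?|?]]; destruct Gb as [?|[?|?]]; destruct Gc as [?|[?|?]]; lra. }
    destruct Cases as [C|[C|[C|C]]].
    + pose proof (pt3_vals a b c (1/3) (1/3) Hnc) as W.
      apply (build a b c O false false false (pt3 a b c (1/3) (1/3))); auto;
      unfold reg, wreg, side, wside; fold p q r; lra.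
    + pose proof (pt3_vals a b c (3/4) (3/4) Hnc) as W.
      apply (build a b c O true true false (pt3 a b c (3/4) (3/4))); auto;
      unfold reg, wreg, side, wside; fold p q r; lra.
    + pose proof (pt3_vals a b c (-1/2) (3/4) Hnc) as W.
      apply (build a b c O false true true (pt3 a b c (-1/2) (3/4))); auto;
      unfold reg, wreg, side, wside; fold p q r; lra.
    + pose proof (pt3_vals a b c (3/4) (-1/2) Hnc) as W.
      apply (build a b c O true false true (pt3 a b c (3/4) (-1/2))); auto;
      unfold reg, wreg, side, wside; fold p q r; lra.
  - intros [Rg [[x0 [Ux0 HRg]] [HcO [Na [Nb Nc]]]]].
    destruct (exists_reg a b c x0 Hnc Ux0) as [sa [sb [sc Hr]]].
    assert (HR : forall y, Rg y <-> reg a b c sa sb sc y).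
    { intros y. rewrite HRg. apply comp_reg; auto. }
    assert (Nv : forall v, reg a b c sa sb sc v -> Defs.closure Rg v).
    { intros v Hv eps Heps. exists v. split; [apply HR; auto|]. rewrite dist_refl0; lra. }
    assert (HW : wreg a b c sa sb sc O).
    { repeat split; (eapply closure_wside; [apply bary_aff|apply HcO|]); intros y Hy; apply HR in Hy; apply Hy. }
    pose proof (bary_sum a b c x0 Hnc) as Hs0.
    apply good_all; auto.
    destruct sa, sb, sc; unfold reg, wreg, side, wside in *.
    + lra.
    + lra.
    + lra.
    + exfalso. apply Na, Nv. unfold reg, side. lra.
    + lra.
    + exfalso. apply Nb, Nv. unfold reg, side. lra.
    + exfalso. apply Nc, Nv. unfold reg, side. lra.
    + lra.
Qed.
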